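(* Let $\mathcal{H}$ be a separable, infinite dimensional, complex Hilbert space, let $T_{1},T_{3}\in\mathcal{B}(\mathcal{H})$ and let $T_{2},T_{4}$ be bounded operators on a (not necessarily separable) Hilbert space $\widetilde{\mathcal{H}}$. If $T_{1}\oplus T_{2}$ is unitarily equivalent to $T_{3}\oplus T_{4}$ (as operators on $\mathcal{H}\oplus\widetilde{\mathcal{H}}$), then there is a separable closed subspace $\mathcal{M}\subset\widetilde{\mathcal{H}}$ that is reducing for both $T_{2}$ and $T_{4}$ such that $T_{1}\oplus(T_{2}|_{\mathcal{M}})$ is unitarily equivalent to $T_{3}\oplus(T_{4}|_{\mathcal{M}})$.
   Context: A closed subspace is reducing for an operator $S$ if it is invariant under both $S$ and $S^{*}$. Two operators $A\in\mathcal{B}(\mathcal{K}_1)$, $B\in\mathcal{B}(\mathcal{K}_2)$ are unitarily equivalent if $B=WAW^{*}$ for some unitary $W:\mathcal{K}_1\to\mathcal{K}_2$. *)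

(* Defs.v *)
From mathcomp Require Import all_boot all_algebra.
From mathcomp Require Export complex.
From mathcomp Require Export reals.
Set Implicit Arguments. Unset Strict Implicit. Unset Printing Implicit Defensive.
Import GRing.Theory Num.Theory.
Local Open Scope ring_scope.

Section Hilbert.
Variable R : realType.
Variable V : lmodType R[i].
Variable ip : V -> V -> R[i].

Definition is_inner_product : Prop :=
  [/\ (forall (a : R[i]) (x y z : V), ip (a *: x + y) z = a * ip x z + ip y z),
      (forall x y : V, ip y x = conjc (ip x y)),
      (forall x : V, 0 <= complex.Re (ip x x)) &
      (forall x : V, ip x x = 0 -> x = 0)].

Definition hnorm (x : V) : R := Num.sqrt (complex.Re (ip x x)).

Definition cauchy_seq (u : nat -> V) : Prop :=
  forall e : R, 0 < e -> exists N : nat, forall m n : nat,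
    (N <= m)%N -> (N <= n)%N -> hnorm (u m - u n) < e.

Definition converges_to (u : nat -> V) (x : V) : Prop :=
  forall e : R, 0 < e -> exists N : nat, forall n : nat,
    (N <= n)%N -> hnorm (u n - x) < e.

Definition is_complete : Prop :=
  forall u : nat -> V, cauchy_seq u -> exists x : V, converges_to u x.

Definition is_hilbert : Prop := is_inner_product /\ is_complete.

Definition infinite_dimensional : Prop :=
  forall s : seq V, exists x : V,
    ~ (exists c : 'I_(size s) -> R[i], x = \sum_(i < size s) c i *: s`_i).

Definition separable_set (M : V -> Prop) : Prop :=
  exists d : nat -> V, (forall n, M (d n)) /\
    forall x, M x -> forall e : R, 0 < e -> exists n, hnorm (x - d n) < e.

Definition separable_space : Prop := separable_set (fun _ => True).

Definition closed_subspace (M : V -> Prop) : Prop :=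
  [/\ M 0,
      (forall (a : R[i]) x y, M x -> M y -> M (a *: x + y)) &
      (forall (u : nat -> V) x, (forall n, M (u n)) -> converges_to u x -> M x)].

Definition bounded_op (T : V -> V) : Prop :=
  (forall (a : R[i]) x y, T (a *: x + y) = a *: T x + T y) /\
  exists K : R, forall x, hnorm (T x) <= K * hnorm x.

Definition is_adjoint (S A : V -> V) : Prop :=
  forall x y, ip (S x) y = ip x (A y).

Definition invariant (S : V -> V) (M : V -> Prop) : Prop :=
  forall x, M x -> M (S x).

Definition reducing (S : V -> V) (M : V -> Prop) : Prop :=
  invariant S M /\ exists A, is_adjoint S A /\ invariant A M.

Definition unitary_equiv_on (N : V -> Prop) (A B : V -> V) : Prop :=
  exists U Us : V -> V,
    invariant U N /\ invariant Us N /\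
    (forall (a : R[i]) x y, N x -> N y -> U (a *: x + y) = a *: U x + U y) /\
    (forall x y, N x -> N y -> ip (U x) y = ip x (Us y)) /\
    (forall x, N x -> U (Us x) = x) /\
    (forall x, N x -> Us (U x) = x) /\
    (forall x, N x -> B x = U (A (Us x))).

End Hilbert.

Definition dsum_ip (R : realType) (V W : lmodType R[i])
  (ip1 : V -> V -> R[i]) (ip2 : W -> W -> R[i]) (x y : V * W) : R[i] :=
  ip1 x.1 y.1 + ip2 x.2 y.2.

Definition dsum_op (V W : Type) (A : V -> V) (B : W -> W) (x : V * W) : V * W :=
  (A x.1, B x.2).

(* Main.v *)
Require Import Defs.
From mathcomp Require Import all_boot all_order all_algebra.
From mathcomp Require Import complex reals.
From mathcomp Require Import ring lra.
From mathcomp Require Import classical_sets.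
From Stdlib Require Import ClassicalEpsilon Classical.
Set Implicit Arguments. Unset Strict Implicit. Unset Printing Implicit Defensive.
Import Order.TTheory GRing.Theory Num.Theory.
Local Open Scope ring_scope.
Local Open Scope complex_scope.

Section Basic0.
Variable R : realType.
Variable V : lmodType R[i].
Variable ip : V -> V -> R[i].
Hypothesis hip : is_inner_product ip.

Local Notation Re := complex.Re.
Local Notation Im := complex.Im.
Ltac cplx := apply/eqP; rewrite eq_complex /=; apply/andP; split; apply/eqP; ring.

Lemma ipL a x y z : ip (a *: x + y) z = a * ip x z + ip y z.
Proof. by case: hip. Qed.
Lemma ipC x y : ip y x = conjc (ip x y).
Proof. by case: hip. Qed.

Lemma ip0l z : ip 0 z = 0.
Proof.
have := ipL 1 0 0 z; rewrite scaler0 addr0 mul1r => h.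
by apply: (addrI (ip 0 z)); rewrite addr0 -h.
Qed.
Lemma ipDl x y z : ip (x + y) z = ip x z + ip y z.
Proof. by rewrite -[x]scale1r ipL mul1r scale1r. Qed.
Lemma ipZl a x z : ip (a *: x) z = a * ip x z.
Proof. by rewrite -[a *: x]addr0 ipL ip0l addr0. Qed.
Lemma ipNl x z : ip (- x) z = - ip x z.
Proof. by rewrite -scaleN1r ipZl mulN1r. Qed.
Lemma ipBl x y z : ip (x - y) z = ip x z - ip y z.
Proof. by rewrite ipDl ipNl. Qed.
Lemma ip0r z : ip z 0 = 0.
Proof. by rewrite ipC ip0l conjc0. Qed.
Lemma ipDr x y z : ip z (x + y) = ip z x + ip z y.
Proof.
rewrite ipC ipDl (ipC x z) (ipC y z).
case: (ip x z) => ? ?; case: (ip y z) => ? ?; cplx.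
Qed.
Lemma ipZr a x z : ip z (a *: x) = conjc a * ip z x.
Proof.
rewrite ipC ipZl (ipC x z); case: (ip x z) => ? ?; case: a => ? ?; cplx.
Qed.
Lemma ipNr x z : ip z (- x) = - ip z x.
Proof.
rewrite ipC ipNl (ipC x z); case: (ip x z) => ? ?; cplx.
Qed.
Lemma ipBr x y z : ip z (x - y) = ip z x - ip z y.
Proof. by rewrite ipDr ipNr. Qed.

Lemma Im_ipxx x : Im (ip x x) = 0.
Proof.
have := ipC x x; case: (ip x x) => a b /= [] => h; lra.
Qed.

Definition n2 x := Re (ip x x).
Lemma n2_ge0 x : 0 <= n2 x.
Proof. by case: hip => _ _ + _; apply. Qed.
Lemma n2_eq0 x : n2 x = 0 -> x = 0.
Proof.
move=> h; case: hip => _ _ _; apply; apply/eqP; rewrite eq_complex /=.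
by rewrite Im_ipxx; apply/andP; split; apply/eqP => //; rewrite -h.
Qed.

Lemma hnormE x : hnorm ip x ^+ 2 = n2 x.
Proof. by rewrite /hnorm sqr_sqrtr // n2_ge0. Qed.
Lemma hnorm_ge0 x : 0 <= hnorm ip x.
Proof. exact: sqrtr_ge0. Qed.
Lemma hnorm0 : hnorm ip 0 = 0.
Proof. by rewrite /hnorm ip0l sqrtr0. Qed.

Lemma ReC x y : Re (ip y x) = Re (ip x y).
Proof. by rewrite ipC; case: (ip x y). Qed.

Lemma n2D x y : n2 (x + y) = n2 x + n2 y + 2 * Re (ip x y).
Proof.
rewrite /n2 ipDl !ipDr (ipC x y).
case: (ip x x) => ? ?; case: (ip y y) => ? ?; case: (ip x y) => ? ? /=; ring.
Qed.

Lemma n2Z a x : n2 (a *: x) = (Re a ^+ 2 + Im a ^+ 2) * n2 x.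
Proof.
rewrite /n2 ipZl ipZr; have := Im_ipxx x.
case: (ip x x) => p q /= ->; case: a => a b /=; ring.
Qed.

Lemma Re_ipZ (s t : R) x y : Re (ip (s%:C *: x) (t%:C *: y)) = s * t * Re (ip x y).
Proof. rewrite ipZl ipZr; case: (ip x y) => p q /=; ring. Qed.

Lemma CS x y : Re (ip x y) <= hnorm ip x * hnorm ip y.
Proof.
have [y0|ny0] := eqVneq (n2 y) 0.
  by rewrite (n2_eq0 y0) ip0r /= mulr_ge0 // hnorm_ge0.
have b0 : 0 < n2 y by rewrite lt0r ny0 n2_ge0.
set r := Re (ip x y).
have h := n2_ge0 ((n2 y)%:C *: x + (- r)%:C *: y).
rewrite n2D !n2Z Re_ipZ /= in h.
have hx := hnormE x; have hy := hnorm_ge0 y; have hx0 := hnorm_ge0 x.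
have hyy := hnormE y.
have : r ^+ 2 <= n2 x * n2 y by nra.
rewrite -hx -hyy -exprMn => h2.
have p := mulr_ge0 hx0 hy.
move: h2 p; move: (hnorm ip x * hnorm ip y) => a; clear; nra.
Qed.

Lemma hnormD x y : hnorm ip (x + y) <= hnorm ip x + hnorm ip y.
Proof.
have h := n2D x y; have c := CS x y.
have := hnormE (x + y); have := hnormE x; have := hnormE y.
have := hnorm_ge0 (x+y); have := hnorm_ge0 x; have := hnorm_ge0 y.
nra.
Qed.

Definition cabs (a : R[i]) := Num.sqrt (Re a ^+ 2 + Im a ^+ 2).

Lemma hnormZ a x : hnorm ip (a *: x) = cabs a * hnorm ip x.
Proof. by rewrite /hnorm -/(n2 _) n2Z sqrtrM // addr_ge0 // sqr_ge0. Qed.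

Lemma cabs_ge0 a : 0 <= cabs a. Proof. exact: sqrtr_ge0. Qed.

Lemma hnormN x : hnorm ip (- x) = hnorm ip x.
Proof.
rewrite -scaleN1r hnormZ /cabs.
have -> : Re (-1 : R[i]) ^+ 2 + Im (-1 : R[i]) ^+ 2 = 1 by rewrite /=; ring.
by rewrite sqrtr1 mul1r.
Qed.

Lemma hnormB x y : hnorm ip (x - y) = hnorm ip (y - x).
Proof. by rewrite -hnormN opprB. Qed.

Lemma CSabs x y : `|Re (ip x y)| <= hnorm ip x * hnorm ip y.
Proof.
have := CS x y; have := CS (- x) y; rewrite hnormN ipNl /=.
case: (ip x y) => p q /= h1 h2.
by rewrite ler_norml; apply/andP; split; lra.
Qed.

End Basic0.

Lemma choice_fun {A B : Type} (P : A -> B -> Prop) :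
  (forall a, exists b, P a b) -> exists f, forall a, P a (f a).
Proof.
move=> h; exists (fun a => proj1_sig (constructive_indefinite_description _ (h a))).
move=> a; exact: proj2_sig.
Qed.

Section Misc.
Variable R : realType.
Lemma invS_small (e : R) : 0 < e -> exists N : nat, forall k, (N <= k)%N -> (k.+1%:R : R)^-1 < e.
Proof.
move=> e0; exists (Num.truncn (e^-1)) => k hk.
have h1 := truncnS_gt (e^-1).
have h2 : ((Num.truncn e^-1).+1%:R : R) <= k.+1%:R by rewrite ler_nat ltnS.
have h3 : e^-1 < k.+1%:R := lt_le_trans h1 h2.
rewrite -[e]invrK ltf_pV2 // ?posrE ?invr_gt0 // ltr0n.
Qed.
Lemma le0_eps (a : R) : (forall e, 0 < e -> a < e) -> a <= 0.
Proof. by move=> h; case: (lerP a 0) => // ha; have := h a ha; rewrite ltxx. Qed.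
End Misc.

Section Proj.
Variable R : realType.
Variable V : lmodType R[i].
Variable ip : V -> V -> R[i].
Hypothesis hH : is_hilbert ip.
Let hip : is_inner_product ip := proj1 hH.
Local Notation Re := complex.Re.
Local Notation Im := complex.Im.
Local Notation n2 := (n2 ip).
Local Notation hnorm := (hnorm ip).

Lemma n2_par a b : n2 (a - b) + n2 (a + b) = 2 * n2 a + 2 * n2 b.
Proof.
rewrite !(n2D hip) -scaleN1r (n2Z hip) ipZr //.
case: (ip a b) => p q /=; ring.
Qed.

Lemma hnorm_lt (h e : R) : 0 <= h -> 0 < e -> h ^+ 2 < e ^+ 2 -> h < e.
Proof. move=> *; nra. Qed.

Lemma proj_orth (N : V -> Prop) w : closed_subspace ip N ->
  exists p, N p /\ forall n, N n -> ip (w - p) n = 0.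
Proof.
case=> N0 Nlin Nlim.
have Nadd x y : N x -> N y -> N (x + y) by move=> ? ?; rewrite -[x]scale1r; apply: Nlin.
have Nscal a x : N x -> N (a *: x) by move=> ?; rewrite -[a *: x]addr0; apply: Nlin.
have Nsub x y : N x -> N y -> N (x - y).
  by move=> ? ?; rewrite -scaleN1r addrC; apply: Nlin.
pose E : set R := fun r => exists n, N n /\ r = n2 (w - n).
have hinf : has_inf E.
  split; first by exists (n2 (w - 0)); exists 0.
  by exists 0 => r [n [_ ->]]; exact: n2_ge0.
set d := inf E.
have dle n : N n -> d <= n2 (w - n) by move=> Nn; apply: (ge_inf hinf.2); exists n.
have d0 : 0 <= d.
  by apply: lb_le_inf; [exact: hinf.1 | move=> r [n [_ ->]]; exact: n2_ge0].
have ik k : 0 < (k.+1%:R : R)^-1 by rewrite invr_gt0 ltr0Sn.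
have : forall k : nat, exists n, N n /\ n2 (w - n) < d + (k.+1%:R)^-1.
  move=> k; have [r [n [Nn ->]] hr] := inf_adherent (ik k) hinf.
  by exists n.
case/choice_fun => u hu.
have hpar k m : n2 (u m - u k) < 2 * (k.+1%:R)^-1 + 2 * (m.+1%:R)^-1.
  have mid : N (2^-1 *: (u k + u m)) by apply: Nscal; apply: Nadd; [exact: (hu k).1 | exact: (hu m).1].
  have := dle _ mid; have := n2_par (w - u k) (w - u m).
  have -> : w - u k - (w - u m) = u m - u k.
    by rewrite opprB addrC addrA subrK.
  have -> : w - u k + (w - u m) = 2 *: (w - 2^-1 *: (u k + u m)).
    rewrite scalerBr scalerA mulfV ?scale1r; last by rewrite pnatr_eq0.
    by rewrite scalerDl scale1r opprD addrACA.
  rewrite (n2Z hip) /=.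
  have := (hu k).2; have := (hu m).2; have e4 : ((1+1)^+2 + (0+0)^+2 : R) = 4 by ring.
  rewrite e4; move=> h1 h2 h3 h4.
  move: h1 h2 h3 h4; move: (k.+1%:R^-1) (m.+1%:R^-1) (n2 (w - u k)) (n2 (w - u m)) (n2 (u m - u k)) (n2 (w - 2^-1 *: (u k + u m))) => a b c e f g. move=> h1 h2 h3 h4. lra.
have cau : cauchy_seq ip u.
  move=> e e0; have e4 : 0 < e ^+ 2 / 4 by rewrite divr_gt0 // exprn_gt0.
  have [K hN] := invS_small e4.
  exists K => m k hm hk; apply: hnorm_lt => //; first exact: hnorm_ge0.
  rewrite (hnormE hip); have := hpar k m; have := hN _ hm; have := hN _ hk.
  move: (n2 (u m - u k)) (k.+1%:R^-1) (m.+1%:R^-1) (e ^+ 2) => a b c f h1 h2 h3; lra.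
have [p hp] := proj2 hH u cau.
have Np : N p by apply: (Nlim u) => // n; exact: (hu n).1.
have pmin : n2 (w - p) <= d.
  apply/ler_addgt0Pr => eps eps0.
  pose B := d + 2.
  have hB k : hnorm (w - u k) <= B.
    have := (hu k).2; have := hnormE hip (w - u k); have := hnorm_ge0 ip (w - u k).
    have : (k.+1%:R : R)^-1 <= 1 by rewrite invf_le1 ?ler1n ?ltr0n.
    rewrite /B; move: (k.+1%:R^-1) (hnorm (w - u k)) (n2 (w - u k)) => a b c h1 h2 h3 h4; nra.
  have [N1 hN1] := invS_small (divr_gt0 eps0 (ltr0Sn _ 1)).
  have [N2 hN2] := hp 1 ltr01.
  have t00 : 0 < eps / (2 * (1 + 2 * B)).
    by apply: divr_gt0 => //; apply: mulr_gt0 => //; rewrite /B; nra.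
  have [N3 hN3] := hp _ t00.
  pose k := maxn N1 (maxn N2 N3).
  have k1 : (N1 <= k)%N by rewrite leq_maxl.
  have k2 : (N2 <= k)%N by rewrite /k (leq_trans (leq_maxl N2 N3)) // leq_maxr.
  have k3 : (N3 <= k)%N by rewrite /k (leq_trans (leq_maxr N2 N3)) // leq_maxr.
  have e1 := hN1 k k1; have e2 := hN2 k k2; have e3 := hN3 k k3.
  have hq := (hu k).2; have ha := hB k.
  have -> : w - p = (w - u k) + (u k - p) by rewrite addrA subrK.
  rewrite (n2D hip) -(hnormE hip (u k - p)).
  have hcs := CS hip (w - u k) (u k - p).
  have t0 := hnorm_ge0 ip (u k - p); have a0 := hnorm_ge0 ip (w - u k).
  have B0 : 0 < 2 * (1 + 2 * B) by rewrite /B; lra.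
  move: e3; rewrite ltr_pdivlMr // => e3.
  rewrite /B in ha e3 B0.
  move: hq ha e3 e1 e2 hcs t0 a0 B0.
  move: (hnorm (u k - p)) (hnorm (w - u k)) (Re (ip (w - u k) (u k - p))) (n2 (w - u k)) (k.+1%:R^-1).
  move=> t a r q iK *; nra.
exists p; split => // n Nn.
set v := w - p.
have vmin q : N q -> n2 v <= n2 (w - q) by move=> Nq; exact: le_trans pmin (dle q Nq).
have hre m : N m -> Re (ip v m) = 0.
  move=> Nm; set r := Re (ip v m); set c := n2 m.
  have c0 : 0 <= c := n2_ge0 hip m.
  pose t := - r / (c + 1).
  have ts : t * (c + 1) = - r by rewrite /t mulfVK //; apply: lt0r_neq0; lra.
  have := vmin _ (Nsub _ _ Np (Nscal t%:C _ Nm)).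
  have -> : w - (p - t%:C *: m) = v + t%:C *: m by rewrite opprB addrA addrC addrA [_ + w]addrC.
  rewrite [n2 (v + _)](n2D hip) [n2 (_ *: m)](n2Z hip) (ipZr hip) /= -/c.
  have -> : Re ((t%:C)^* * ip v m) = t * r by rewrite /r; case: (ip v m) => ? ? /=; ring.
  move: ts c0; clearbody t r c; move: (n2 v) => a *; nra.
have := hre _ (Nscal 'i%C _ Nn); rewrite (ipZr hip).
have := hre _ Nn.
case: (ip v n) => x y /= hx hy.
by apply/eqP; rewrite eq_complex /= hx; apply/andP; split => //; apply/eqP; lra.
Qed.
End Proj.

Section Riesz.
Variable R : realType.
Variable V : lmodType R[i].
Variable ip : V -> V -> R[i].
Hypothesis hH : is_hilbert ip.
Let hip : is_inner_product ip := proj1 hH.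
Local Notation Re := complex.Re.
Local Notation Im := complex.Im.
Local Notation n2 := (n2 ip).
Local Notation hnorm := (hnorm ip).

Lemma ip_inj z1 z2 : (forall x, ip x z1 = ip x z2) -> z1 = z2.
Proof.
move=> h; apply/eqP; rewrite -subr_eq0; apply/eqP.
case: hip => _ _ _; apply; by rewrite (ipBr hip) h subrr.
Qed.

Lemma conv_scale c u x : converges_to ip u x ->
  converges_to ip (fun n => c *: u n) (c *: x).
Proof.
move=> hu e e0.
have c1 : 0 < cabs c + 1 by have := cabs_ge0 c; lra.
have [N hN] := hu _ (divr_gt0 e0 c1).
exists N => n hn; rewrite -scalerBr (hnormZ hip).
have := hN n hn; rewrite ltr_pdivlMr // => h.
have := cabs_ge0 c; have := hnorm_ge0 ip (u n - x).
move: h; move: (cabs c) (hnorm (u n - x)) => a b *; nra.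
Qed.

Lemma riesz (f : V -> R[i]) :
  (forall a x y, f (a *: x + y) = a * f x + f y) ->
  (forall u x, converges_to ip u x -> (forall n, f (u n) = 0) -> f x = 0) ->
  exists z, forall x, f x = ip x z.
Proof.
move=> flin fcont.
have f0 : f 0 = 0.
  have := flin 1 0 0; rewrite scaler0 addr0 mul1r => h.
  by apply: (addrI (f 0)); rewrite addr0 -h.
have fZ a x : f (a *: x) = a * f x by rewrite -[a *: x]addr0 flin f0 addr0.
have fB x y : f (x - y) = f x - f y.
  by rewrite -scaleN1r addrC flin mulN1r addrC.
case: (classic (exists w0, f w0 != 0)) => [[w0 hw0]|hall]; last first.
  exists 0 => x; rewrite (ip0r hip); apply/eqP; apply/negPn/negP => hx.
  by apply: hall; exists x.
have Kcl : closed_subspace ip (fun x => f x = 0).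
  split => //; first by move=> a x y hx hy; rewrite flin hx hy mulr0 addr0.
  by move=> u x h1 h2; exact: fcont h2 h1.
have [p [Kp horth]] := proj_orth hH w0 Kcl.
set v := w0 - p.
have fv : f v = f w0 by rewrite fB Kp subr0.
have vv : ip v v != 0.
  apply/negP => /eqP h; case: hip => _ _ _ /(_ v h) v0.
  by move: hw0; rewrite -fv v0 f0 eqxx.
exists (conjc (f v / ip v v) *: v) => x.
rewrite (ipZr hip) conjcK.
have Kx : f (f x *: v - f v *: x) = 0 by rewrite fB !fZ mulrC subrr.
have o : ip (f x *: v - f v *: x) v = 0 by rewrite (ipC hip) horth // conjc0.
move: o; rewrite (ipBl hip) !(ipZl hip) => /eqP; rewrite subr_eq0 => /eqP o.
apply: (mulIf vv); rewrite mulrAC divfK // o.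
Qed.

Lemma adjoint_exists T : bounded_op ip T ->
  exists A, is_adjoint ip T A /\ bounded_op ip A.
Proof.
case=> Tlin [K hK].
have T0 : T 0 = 0.
  have := Tlin 1 0 0; rewrite scaler0 addr0 scale1r => h.
  by apply: (addrI (T 0)); rewrite addr0 -h.
have TZ a x : T (a *: x) = a *: T x by rewrite -[a *: x]addr0 Tlin T0 addr0.
have TB x y : T (x - y) = T x - T y.
  by rewrite -scaleN1r addrC Tlin scaleN1r addrC.
have hK' x : hnorm (T x) <= `|K| * hnorm x.
  apply: le_trans (hK x) _; apply: ler_wpM2r; [exact: hnorm_ge0 | exact: ler_norm].
have hex y : exists z, forall x, ip (T x) y = ip x z.
  have key u x : converges_to ip u x -> (forall n, ip (T (u n)) y = 0) ->
      Re (ip (T x) y) = 0.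
    move=> hu h0; apply/eqP; rewrite -normr_le0; apply: le0_eps => e e0.
    have B0 : 0 < `|K| * hnorm y + 1.
      by have := mulr_ge0 (normr_ge0 K) (hnorm_ge0 ip y); lra.
    have [N hN] := hu _ (divr_gt0 e0 B0).
    have := CSabs hip (T x - T (u N)) y; rewrite (ipBl hip) h0 subr0 -TB.
    have := hK' (x - u N); rewrite (hnormB hip).
    have := hN N (leqnn N); rewrite ltr_pdivlMr //.
    have := hnorm_ge0 ip y; have := hnorm_ge0 ip (u N - x); have := normr_ge0 K.
    have := hnorm_ge0 ip (T (x - u N)).
    move: (hnorm (T (x - u N))) (hnorm (u N - x)) (hnorm y) `|K| `|Re (ip (T x) y)|.
    move=> a b c k r *; nra.
  have hl a x1 x2 : ip (T (a *: x1 + x2)) y = a * ip (T x1) y + ip (T x2) y.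
    by rewrite Tlin (ipL hip).
  suff hc : forall u x, converges_to ip u x -> (forall n, ip (T (u n)) y = 0) -> ip (T x) y = 0.
    by case: (@riesz (fun x => ip (T x) y) hl hc) => z hz; exists z.
  move=> u x hu h0.
  have r0 := key u x hu h0.
  have i0 := key (fun n => (- 'i%C) *: u n) ((- 'i%C) *: x) (conv_scale _ hu).
  move: i0; rewrite TZ (ipZl hip).
  have h1 n : ip (T (- 'i%C *: u n)) y = 0 by rewrite TZ (ipZl hip) h0 mulr0.
  move=> /(_ h1); move: r0; case: (ip (T x) y) => a b /= -> hb.
  by apply/eqP; rewrite eq_complex /=; apply/andP; split => //; apply/eqP; lra.
case/choice_fun: hex => A hA.
exists A; split; first by move=> x y; exact: hA.
split.
  move=> a y y'; apply: ip_inj => x.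
  by rewrite -hA (ipDr hip) (ipZr hip) !hA (ipDr hip) (ipZr hip).
exists `|K| => y.
have h := CS hip (T (A y)) y; rewrite hA in h.
have := hK' (A y); have := hnormE hip (A y).
have := hnorm_ge0 ip (A y); have := hnorm_ge0 ip y; have := normr_ge0 K.
have := hnorm_ge0 ip (T (A y)).
rewrite /n2 in h *.
move: h; move: (hnorm (A y)) (hnorm y) `|K| (hnorm (T (A y))) (Re (ip (A y) (A y))).
move=> a b k t s h h0 h1 h2 h3 h4 h5. have h6 : t * b <= k * a * b by nra. have h7 : a * a <= a * (k * b) by rewrite -expr2 h4; lra. case: (lerP a (k * b)) => // h8. have a0 : 0 < a by apply: le_lt_trans h8; nra. have : a * (k * b) < a * a by rewrite ltr_pM2l. lra.
Qed.
End Riesz.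

Section Gen.
Variable R : realType.
Variables V W : lmodType R[i].
Variable ipV : V -> V -> R[i].
Variable ipW : W -> W -> R[i].

Lemma lin0 (L : V -> W) : (forall a x y, L (a *: x + y) = a *: L x + L y) -> L 0 = 0.
Proof.
move=> Llin; have := Llin 1 0 0; rewrite scaler0 addr0 scale1r => h.
by apply: (addrI (L 0)); rewrite addr0 -h.
Qed.
Lemma linB (L : V -> W) : (forall a x y, L (a *: x + y) = a *: L x + L y) ->
  forall x y, L (x - y) = L x - L y.
Proof. by move=> Llin x y; rewrite -scaleN1r addrC Llin scaleN1r addrC. Qed.
Lemma linD (L : V -> W) : (forall a x y, L (a *: x + y) = a *: L x + L y) ->
  forall x y, L (x + y) = L x + L y.
Proof. by move=> Llin x y; rewrite -[x]scale1r Llin !scale1r. Qed.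
Lemma linZ (L : V -> W) : (forall a x y, L (a *: x + y) = a *: L x + L y) ->
  forall a x, L (a *: x) = a *: L x.
Proof. by move=> Llin a x; rewrite -[a *: x]addr0 Llin lin0 // addr0. Qed.

Lemma conv_lin (L : V -> W) K u x :
  (forall a x y, L (a *: x + y) = a *: L x + L y) ->
  (forall x, hnorm ipW (L x) <= K * hnorm ipV x) ->
  converges_to ipV u x -> converges_to ipW (fun n => L (u n)) (L x).
Proof.
move=> Llin hK hu e e0.
have K0 : 0 < `|K| + 1 by have := normr_ge0 K; lra.
have [N hN] := hu _ (divr_gt0 e0 K0).
exists N => n hn; rewrite -linB //.
have := hN n hn; rewrite ltr_pdivlMr // => h1.
have h2 := hK (u n - x).
have := hnorm_ge0 ipV (u n - x); have := hnorm_ge0 ipW (L (u n - x)).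
have := ler_norm K; have := normr_ge0 K.
clear hK hN K0; move: h1 h2; move: (hnorm ipV (u n - x)) (hnorm ipW (L (u n - x))).
move=> s h h1 h2 h3 h4 h5 h6.
have : K * s <= `|K| * s by apply: ler_wpM2r.
nra.
Qed.
End Gen.

Section Span.
Variable R : realType.
Variable W : lmodType R[i].
Variable ip : W -> W -> R[i].
Hypothesis hip : is_inner_product ip.
Variable X : countType.
Variable elt : X -> W.
Local Notation Re := complex.Re.
Local Notation Im := complex.Im.
Local Notation hnorm := (hnorm ip).

Definition Msp (y : W) : Prop :=
  forall P, closed_subspace ip P -> (forall x, P (elt x)) -> P y.

Lemma Msp_closed : closed_subspace ip Msp.
Proof.
split.
- by move=> P [] .
- move=> a x y hx hy P hP he; case: (hP) => _ hl _; apply: hl; [exact: hx | exact: hy].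
- move=> u x hu hc P hP he; case: (hP) => _ _ hlim; apply: (hlim u) => // n; exact: hu.
Qed.

Lemma Msp_elt x : Msp (elt x).
Proof. by move=> P _; apply. Qed.

Lemma Msp_inv (L : W -> W) K :
  (forall a x y, L (a *: x + y) = a *: L x + L y) ->
  (forall x, hnorm (L x) <= K * hnorm x) ->
  (forall x, Msp (L (elt x))) -> Defs.invariant L Msp.
Proof.
move=> Llin hK hL y My.
have [M0 Mlin Mlim] := Msp_closed.
apply: (My (fun y => Msp (L y))) => //; split.
- by rewrite lin0.
- by move=> a x z hx hz; rewrite Llin; apply: Mlin.
- move=> u x hu hc; apply: (Mlim (fun n => L (u n))) => //.
  exact: conv_lin Llin hK hc.
Qed.

Local Notation Cq := (int * int * nat)%type.
Definition cq (c : Cq) : R[i] :=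
  Complex (c.1.1%:~R / c.2.+1%:R) (c.1.2%:~R / c.2.+1%:R).
Local Notation term := (seq Cq * X)%type.
Definition tv (t : term) : W := foldr (fun c acc => cq c * acc) 1 t.1 *: elt t.2.
Definition dd (l : seq term) : W := foldr (fun t acc => tv t + acc) 0 l.

Lemma dd_cat l1 l2 : dd (l1 ++ l2) = dd l1 + dd l2.
Proof. by elim: l1 => [|t l IH] /=; rewrite ?add0r // IH addrA. Qed.

Lemma dd_scale c l : dd [seq (c :: t.1, t.2) | t <- l] = cq c *: dd l.
Proof.
elim: l => [|t l IH] /=; first by rewrite scaler0.
by rewrite IH scalerDr /tv /= scalerA.
Qed.

Lemma Msp_dd l : Msp (dd l).
Proof.
have [M0 Mlin _] := Msp_closed.
by elim: l => [|t l IH] //=; apply: Mlin => //; exact: Msp_elt.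
Qed.

Lemma approx_c (a : R[i]) e : 0 < e -> exists c, cabs (a - cq c) < e.
Proof.
move=> e0.
have e2 : 0 < e / 2 by rewrite divr_gt0.
have [N hN] := invS_small e2.
have hs := hN N (leqnn N).
set s : R := N.+1%:R.
have s0 : 0 < s by rewrite ltr0Sn.
case: a => p q.
exists (Num.floor (p * s), Num.floor (q * s), N).
rewrite /cabs /cq /=.
have hb (r : R) : 0 <= r - (Num.floor (r * s))%:~R / s < s^-1.
  have := floor_itv (r * s); rewrite intrD => /andP [h1 h2].
  have -> : r - (Num.floor (r * s))%:~R / s = (r * s - (Num.floor (r * s))%:~R) * s^-1.
    by rewrite mulrBl mulfK // lt0r_neq0.
  apply/andP; split.
    by apply: mulr_ge0; [rewrite subr_ge0 | rewrite invr_ge0 ltW].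
  rewrite -[X in _ < X]mul1r ltr_pM2r ?invr_gt0 //.
  by rewrite ltrBlDl.
have /andP [p1 p2] := hb p; have /andP [q1 q2] := hb q.
have hlt : Num.sqrt ((p - (Num.floor (p * s))%:~R / s) ^+ 2 + (q - (Num.floor (q * s))%:~R / s) ^+ 2) < e.
  apply: hnorm_lt; [exact: sqrtr_ge0 | exact: e0 |].
  rewrite sqr_sqrtr; last by rewrite addr_ge0 // sqr_ge0.
  move: p1 p2 q1 q2 hs; rewrite -/s.
  move: (p - (Num.floor (p * s))%:~R / s) (q - (Num.floor (q * s))%:~R / s) (s^-1) => x y z *; nra.
move: hlt; congr (Num.sqrt (_ + _) < _); congr (_ ^+ 2); rewrite /GRing.add /=; ring.
Qed.

Lemma hnorm_tri x y z : hnorm (x - z) <= hnorm (x - y) + hnorm (y - z).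
Proof. by apply: le_trans (hnormD hip _ _); rewrite addrA subrK. Qed.

Lemma addrKB (x y z : W) : (x + z) - (y + z) = x - y.
Proof. by rewrite opprD addrACA subrr addr0. Qed.
Lemma addrKB' (x y z : W) : (z + x) - (z + y) = x - y.
Proof. by rewrite opprD addrACA subrr add0r. Qed.

Lemma Msp_sep : separable_set ip Msp.
Proof.
pose C y := forall e, 0 < e -> exists l, hnorm (y - dd l) < e.
have Ccl : closed_subspace ip C.
  split.
  - by move=> e e0; exists [::]; rewrite /= subrr (hnorm0 hip).
  - move=> a y y' hy hy' e e0.
    have e3 : 0 < e / 3 by rewrite divr_gt0.
    have hy0 := hnorm_ge0 ip y.
    have p1 : 0 < e / 3 / (hnorm y + 1) by rewrite divr_gt0 //; lra.
    have [c hc] := approx_c a p1.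
    have cc0 := cabs_ge0 (cq c).
    have p2 : 0 < e / 3 / (cabs (cq c) + 1) by rewrite divr_gt0 //; lra.
    have [l1 hl1] := hy _ p2.
    have [l2 hl2] := hy' (e / 3) e3.
    exists ([seq (c :: t.1, t.2) | t <- l1] ++ l2).
    rewrite dd_cat dd_scale.
    apply: le_lt_trans (hnorm_tri _ (cq c *: y + y') _) _.
    apply: le_lt_trans (lerD (lexx _) (hnorm_tri _ (cq c *: dd l1 + y') _)) _.
    rewrite !addrKB addrKB' -scalerBl -scalerBr !(hnormZ hip).
    move: hc; rewrite ltr_pdivlMr; last by lra.
    move: hl1; rewrite ltr_pdivlMr; last by lra.
    have := hnorm_ge0 ip (y - dd l1); have := cabs_ge0 (a - cq c).
    move: hl2 hy0 cc0.
    move: (hnorm (y - dd l1)) (cabs (a - cq c)) (cabs (cq c)) (hnorm y) (hnorm (y' - dd l2)).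
    move=> p q r t v *; nra.
  - move=> u y hu hc e e0.
    have e2 : 0 < e / 2 by rewrite divr_gt0.
    have [N hN] := hc _ e2.
    have [l hl] := hu N _ e2.
    exists l; apply: le_lt_trans (hnorm_tri _ (u N) _) _.
    rewrite (hnormB hip); have := hN N (leqnn N); lra.
have MC y : Msp y -> C y.
  move=> My; apply: My => // x e e0; exists [:: ([::], x)].
  by rewrite /dd /tv /= scale1r addr0 subrr (hnorm0 hip).
exists (fun n => if (unpickle n : option (seq term)) is Some l then dd l else 0).
split.
  move=> n; case: unpickle => [l|]; first exact: Msp_dd.
  by case: Msp_closed.
move=> y My e e0; case: (MC y My e e0) => l hl; exists (pickle l).
by rewrite pickleK.
Qed.
End Span.


Unset Implicit Arguments.
Close Scope complex_scope.
Local Open Scope ring_scope.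

Theorem lemma3p2 (R : realType)
  (H : lmodType R[i]) (ip1 : H -> H -> R[i])
  (Ht : lmodType R[i]) (ip2 : Ht -> Ht -> R[i])
  (hH : is_hilbert ip1) (sepH : separable_space ip1)
  (infH : infinite_dimensional H)
  (hHt : is_hilbert ip2)
  (T1 T3 : H -> H) (T2 T4 : Ht -> Ht)
  (bT1 : bounded_op ip1 T1) (bT3 : bounded_op ip1 T3)
  (bT2 : bounded_op ip2 T2) (bT4 : bounded_op ip2 T4)
  (ue : unitary_equiv_on (dsum_ip ip1 ip2) (fun _ => True)
          (dsum_op T1 T2) (dsum_op T3 T4)) :
  exists M : Ht -> Prop,
    [/\ closed_subspace ip2 M, separable_set ip2 M,
        reducing ip2 T2 M, reducing ip2 T4 M &
        unitary_equiv_on (dsum_ip ip1 ip2) (fun x => M x.2)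
          (dsum_op T1 T2) (dsum_op T3 T4)].
Proof.
have hip1 := proj1 hH; have hip2 := proj1 hHt.
pose ipP := dsum_ip ip1 ip2.
case: ue => U [Us [_ [_ [Ulin0 [Uadj0 [UUs0 [UsU0 Uconj0]]]]]]].
have Ulin a z z' : U (a *: z + z') = a *: U z + U z' by exact: Ulin0.
have Uadj z z' : ipP (U z) z' = ipP z (Us z') by exact: Uadj0.
have UUs z : U (Us z) = z by exact: UUs0.
have UsU z : Us (U z) = z by exact: UsU0.
have Uslin a z z' : Us (a *: z + z') = a *: Us z + Us z'.
  by rewrite -{1}(UUs z) -{1}(UUs z') -Ulin UsU.
have ReP z : complex.Re (ipP z z) = n2 ip1 z.1 + n2 ip2 z.2.
  by rewrite /ipP /dsum_ip /n2; case: (ip1 _ _) => ? ?; case: (ip2 _ _) => ? ?.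
have Uiso z : complex.Re (ipP (U z) (U z)) = complex.Re (ipP z z) by rewrite Uadj UsU.
have Usiso z : complex.Re (ipP (Us z) (Us z)) = complex.Re (ipP z z).
  by rewrite -(Uadj (Us z) z) UUs.
have n20 : n2 ip2 0 = 0 by rewrite /n2 (ip0l hip2).
have n10 : n2 ip1 0 = 0 by rewrite /n2 (ip0l hip1).
pose UH h := (U (h, 0)).2. pose UsH h := (Us (h, 0)).2.
pose UT y := (U (0, y)).2. pose UsT y := (Us (0, y)).2.
have pairH a (h h' : H) : (a *: h + h', 0 : Ht) = a *: (h, 0) + (h', 0).
  have -> : a *: (h, 0 : Ht) + (h', 0) = (a *: h + h', a *: 0 + 0) by [].
  by rewrite scaler0 addr0.
have pairT a (y y' : Ht) : (0 : H, a *: y + y') = a *: (0, y) + (0, y').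
  have -> : a *: (0 : H, y) + (0, y') = (a *: 0 + 0, a *: y + y') by [].
  by rewrite scaler0 addr0.
have UHlin a x y : UH (a *: x + y) = a *: UH x + UH y by rewrite /UH pairH Ulin.
have UsHlin a x y : UsH (a *: x + y) = a *: UsH x + UsH y by rewrite /UsH pairH Uslin.
have UTlin a x y : UT (a *: x + y) = a *: UT x + UT y by rewrite /UT pairT Ulin.
have UsTlin a x y : UsT (a *: x + y) = a *: UsT x + UsT y by rewrite /UsT pairT Uslin.
have boundH (F : H * Ht -> H * Ht) : (forall z, complex.Re (ipP (F z) (F z)) = complex.Re (ipP z z)) ->
    forall h, hnorm ip2 (F (h, 0)).2 <= 1 * hnorm ip1 h.
  move=> Fiso h; rewrite mul1r /hnorm; apply: ler_wsqrtr.
  have := Fiso (h, 0); rewrite !ReP /= n20 addr0 -/(n2 ip2 _) => e.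
  by rewrite -[complex.Re (ip1 h h)]/(n2 ip1 h) -e lerDr (n2_ge0 hip1).
have boundT (F : H * Ht -> H * Ht) : (forall z, complex.Re (ipP (F z) (F z)) = complex.Re (ipP z z)) ->
    forall y, hnorm ip2 (F (0, y)).2 <= 1 * hnorm ip2 y.
  move=> Fiso y; rewrite mul1r /hnorm; apply: ler_wsqrtr.
  have := Fiso (0, y); rewrite !ReP /= n10 add0r -/(n2 ip2 (_ (0, y)).2) => e.
  by rewrite -[complex.Re (ip2 y y)]/(n2 ip2 y) -e lerDr (n2_ge0 hip1).
have [A2 [adjA2 bA2]] := adjoint_exists hHt bT2.
have [A4 [adjA4 bA4]] := adjoint_exists hHt bT4.
pose f (i : nat) : Ht -> Ht :=
  match i with 0 => T2 | 1 => A2 | 2 => T4 | 3 => A4 | 4 => UT | _ => UsT end.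
have fP i : bounded_op ip2 (f i).
  case: i => [|[|[|[|[|i]]]]] //=; split => //; exists 1; [exact: boundT Uiso | exact: boundT Usiso].
case: sepH => d1 [_ hd1].
pose elt (x : (seq nat * (bool * nat))%type) : Ht :=
  foldr f (if x.2.1 then UsH (d1 x.2.2) else UH (d1 x.2.2)) x.1.
pose M := Msp ip2 elt.
have [M0 Mlin Mlim] := Msp_closed ip2 elt.
have finv i : Defs.invariant (f i) M.
  case: (fP i) => flin [K hK]; apply: (Msp_inv (elt := elt) flin hK) => x.
  by have := Msp_elt (ip := ip2) (elt := elt) (i :: x.1, x.2).
have seed (L : H -> Ht) (b : bool) : (forall a x y, L (a *: x + y) = a *: L x + L y) ->
    (forall h, hnorm ip2 (L h) <= 1 * hnorm ip1 h) ->
    (forall n, L (d1 n) = elt ([::], (b, n))) -> forall h, M (L h).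
  move=> Llin hL hLd h.
  have : forall k : nat, exists n, hnorm ip1 (h - d1 n) < (k.+1%:R)^-1.
    by move=> k; apply: hd1 => //; rewrite invr_gt0 ltr0Sn.
  case/choice_fun => nk hnk.
  have conv : converges_to ip1 (fun k => d1 (nk k)) h.
    move=> e e0; have [N hN] := invS_small e0; exists N => k hk.
    by rewrite (hnormB hip1); apply: lt_trans (hnk k) (hN k hk).
  apply: (Mlim (fun k => L (d1 (nk k)))); last exact: conv_lin Llin hL conv.
  by move=> k; rewrite hLd; exact: Msp_elt.
have MUH h : M (UH h) by apply: (seed UH false) => //; exact: boundH Uiso.
have MUsH h : M (UsH h) by apply: (seed UsH true) => //; exact: boundH Usiso.
have split_z (z : H * Ht) : z = 1 *: (z.1, 0) + (0, z.2).
  case: z => x y.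
  have -> : 1 *: (x, 0 : Ht) + (0, y) = (1 *: x + 0, 1 *: 0 + y) by [].
  by rewrite scale1r scaler0 addr0 add0r.
exists M; split.
- exact: Msp_closed.
- by have hs := Msp_sep hip2 elt.
- split; first exact: (finv 0%N).
  by exists A2; split => //; exact: (finv 1%N).
- split; first exact: (finv 2%N).
  by exists A4; split => //; exact: (finv 3%N).
exists U, Us; split.
  move=> z Mz; rewrite (split_z z) Ulin /=; apply: Mlin; first exact: MUH.
  exact: (finv 4%N).
split.
  move=> z Mz; rewrite (split_z z) Uslin /=; apply: Mlin; first exact: MUsH.
  exact: (finv 5%N).
split; first by move=> *; exact: Ulin.
split; first by move=> *; exact: Uadj.
split; first by move=> *; exact: UUs.
split; first by move=> *; exact: UsU.
by move=> x _; exact: Uconj0.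
Qed.
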